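(* Let $\mathcal L$ be a lattice in $\mathbb R^2$ and $n\ge2$ an integer. Then there is a convex curve $\mathcal C$ of length $L$ that contains exactly $n$ points of $\mathcal L$, such that, with $$R_1=\min_{P\in\mathcal C}\rho(P),\qquad R_2=\max_{P\in\mathcal C}\rho(P),$$ the inequalities $$\frac{L}{(A_{\mathcal L}R_1)^{1/3}}\le\left(\frac{\tau(\mathcal C)R_2}{A_{\mathcal L}R_1}\right)^{1/3}L^{2/3}\le\frac{\tau(\mathcal C)R_2}{(A_{\mathcal L}R_1)^{1/3}}<n+2$$ hold, where $\tau(\mathcal C)=\int_{\mathcal C}\kappa\,ds$.
   Context: A lattice is a set $\mathcal L=\mathcal L(v_0,v_1,v_2)=\{v_0+mv_1+nv_2: m,n\in\mathbb Z\}$ where $v_0,v_1,v_2\in\mathbb R^2$ and $v_1,v_2$ are linearly independent. Its invariant is $A_{\mathcal L}=|\det(v_1,v_2)|$. All curves are of class $C^2$ with nonvanishing first and second derivative vectors, oriented so that the curvature $\kappa$ is positive; a convex curve is such a curve. The radius of curvature is $\rho=1/\kappa$, $s$ is arclength, and $\tau(\mathcal C)=\int_{\mathcal C}\kappa\,ds$ is the total curvature. *)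

(* Defs.v *)
From Stdlib Require Import Reals Lra List ZArith.
From Coquelicot Require Import Coquelicot.
Open Scope R_scope.

Definition pt := (R * R)%type.

Definition in_lattice (v0 v1 v2 : pt) (p : pt) : Prop :=
  exists m k : Z,
    fst p = fst v0 + IZR m * fst v1 + IZR k * fst v2 /\
    snd p = snd v0 + IZR m * snd v1 + IZR k * snd v2.

Definition det2 (u v : pt) : R := fst u * snd v - snd u * fst v.

Definition lin_indep (v1 v2 : pt) : Prop := det2 v1 v2 <> 0.

Definition lattice_inv (v1 v2 : pt) : R := Rabs (det2 v1 v2).

Definition d1 (f : R -> R) : R -> R := Derive f.
Definition d2 (f : R -> R) : R -> R := Derive (Derive f).

Definition convex_curve (a b : R) (x y : R -> R) : Prop :=
  a < b /\
  (forall t, ex_derive x t /\ ex_derive y t /\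
             ex_derive (Derive x) t /\ ex_derive (Derive y) t /\
             continuous (d2 x) t /\ continuous (d2 y) t) /\
  (forall t, a <= t <= b ->
     (d1 x t <> 0 \/ d1 y t <> 0) /\
     (d2 x t <> 0 \/ d2 y t <> 0) /\
     d1 x t * d2 y t - d1 y t * d2 x t > 0).

Definition speed (x y : R -> R) (t : R) : R :=
  sqrt (d1 x t ^ 2 + d1 y t ^ 2).

Definition curvature (x y : R -> R) (t : R) : R :=
  (d1 x t * d2 y t - d1 y t * d2 x t) / (speed x y t ^ 3).

Definition radius (x y : R -> R) (t : R) : R := / curvature x y t.

Definition curve_length (a b : R) (x y : R -> R) : R :=
  RInt (speed x y) a b.

Definition total_curvature (a b : R) (x y : R -> R) : R :=
  RInt (fun t => curvature x y t * speed x y t) a b.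

Definition on_curve (a b : R) (x y : R -> R) (p : pt) : Prop :=
  exists t, a <= t <= b /\ p = (x t, y t).

Definition lattice_count (v0 v1 v2 : pt) (a b : R) (x y : R -> R) (n : nat)
  : Prop :=
  exists l : list pt, NoDup l /\ length l = n /\
    forall p, In p l <-> (on_curve a b x y p /\ in_lattice v0 v1 v2 p).

Definition is_min_radius (a b : R) (x y : R -> R) (R1 : R) : Prop :=
  (exists t, a <= t <= b /\ radius x y t = R1) /\
  (forall t, a <= t <= b -> R1 <= radius x y t).

Definition is_max_radius (a b : R) (x y : R -> R) (R2 : R) : Prop :=
  (exists t, a <= t <= b /\ radius x y t = R2) /\
  (forall t, a <= t <= b -> radius x y t <= R2).

Definition cbrt (z : R) : R := Rpower z (1/3).

(* Main.v *)
From Stdlib Require Import Reals Lra Lia List ZArith FunctionalExtensionality FinFun.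
From Coquelicot Require Import Coquelicot.
Require Import Defs.
Open Scope R_scope.


Definition crv (p0 e w Mr : R) := fun t : R => p0 + t*e + (Mr*t + t*(t-1)/2)*w.

Lemma crv_D1 p0 e w Mr : Derive (crv p0 e w Mr) = fun t => e + (Mr + t - 1/2)*w.
Proof. apply functional_extensionality => t. apply is_derive_unique.
unfold crv. auto_derive; [trivial|field]. Qed.

Lemma crv_D2 e w Mr : Derive (fun t => e + (Mr + t - 1/2)*w) = fun _ => w.
Proof. apply functional_extensionality => t. apply is_derive_unique.
auto_derive; [trivial|ring]. Qed.

Lemma crv_ex p0 e w Mr t : ex_derive (crv p0 e w Mr) t.
Proof. unfold crv. auto_derive. trivial. Qed.

Lemma crv_ex2 e w Mr t : ex_derive (fun t => e + (Mr + t - 1/2)*w) t.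
Proof. auto_derive. trivial. Qed.

Definition Sq (ex ey wx wy Mr t : R) := (ex + (Mr+t-1/2)*wx)^2 + (ey + (Mr+t-1/2)*wy)^2.

Lemma Sq_pos ex ey wx wy Mr t : ex*wy - ey*wx <> 0 -> 0 < Sq ex ey wx wy Mr t.
Proof. intros H. unfold Sq. set (s := Mr + t - 1/2).
assert (H2: 0 < (ex*wy-ey*wx)^2) by (apply pow2_gt_0; auto).
destruct (Req_dec (ex + s*wx) 0) as [E|E].
- assert (ey + s*wy <> 0). { intro E2. apply H. 
   replace ex with (-(s*wx)) by lra. replace ey with (-(s*wy)) by lra. ring. }
  assert (0 < (ey + s*wy)^2) by (apply pow2_gt_0; auto). pose proof (pow2_ge_0 (ex+s*wx)). lra.
- assert (0 < (ex + s*wx)^2) by (apply pow2_gt_0; auto). pose proof (pow2_ge_0 (ey+s*wy)). lra.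
Qed.

Lemma cont_inv ex ey wx wy Mr c t : ex*wy - ey*wx <> 0 ->
  continuous (fun t => c / Sq ex ey wx wy Mr t) t.
Proof. intros H. apply (@ex_derive_continuous R_AbsRing R_NormedModule).
 pose proof (Sq_pos ex ey wx wy Mr t H). unfold Sq in *. auto_derive. lra. Qed.

Lemma cont_sqrt ex ey wx wy Mr t : ex*wy - ey*wx <> 0 ->
  continuous (fun t => sqrt (Sq ex ey wx wy Mr t)) t.
Proof. intros H. apply (@ex_derive_continuous R_AbsRing R_NormedModule).
 pose proof (Sq_pos ex ey wx wy Mr t H). unfold Sq in *. auto_derive. lra. Qed.

Lemma exp_le' x y : x <= y -> exp x <= exp y.
Proof. intros [H|H]; [left; apply exp_increasing; auto | right; subst; auto]. Qed.

Lemma rpow_lem (L T P : R) : 0 < L -> 0 < P -> L <= T ->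
  L / Rpower P (1/3) <= Rpower (T/P) (1/3) * Rpower L (2/3) /\
  Rpower (T/P) (1/3) * Rpower L (2/3) <= T / Rpower P (1/3).
Proof. intros HL HP HLT. assert (HT: 0 < T) by lra.
unfold Rpower. rewrite ln_div by auto.
assert (ln L <= ln T) by (apply ln_le; auto).
destruct (ln_exists L HL) as [l ->]. destruct (ln_exists T HT) as [t ->].
rewrite !ln_exp in *.
unfold Rdiv. rewrite <- !exp_Ropp, <- !exp_plus.
split; apply exp_le'; lra. Qed.

Lemma cbrt_cube z : 0 < z -> Rpower (z^3) (1/3) = z.
Proof. intros H. rewrite <- (Rpower_pow 3 z H), Rpower_mult.
replace (INR 3 * (1/3)) with 1 by (simpl; field). apply Rpower_1; auto. Qed.

Lemma half_int (k : nat) : exists z : Z, IZR z = INR k * (INR k - 1)/2.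
Proof. induction k as [|k [z Hz]].
- exists 0%Z. simpl. field.
- exists (z + Z.of_nat k)%Z. rewrite plus_IZR, <- INR_IZR_INZ, Hz, S_INR. field. Qed.


Lemma final_ineq (N Ar m2 K2 s1 s2 tau Lr Ra Rb : R) :
 2 <= N -> 0 < Ar -> 0 < m2 -> K2 <= (1+1/N)*m2 -> m2 <= s1 -> s1 <= K2 ->
 m2 <= s2 -> s2 <= K2 ->
 Ra = sqrt s1 ^3 / Ar -> Rb = sqrt s2^3/Ar -> 0 < tau -> tau <= (N-1)*(Ar/m2) ->
 0 < Lr -> Lr <= tau*Rb ->
 Lr / cbrt (Ar*Ra) <= cbrt (tau*Rb/(Ar*Ra)) * Rpower Lr (2/3) /\
 cbrt (tau*Rb/(Ar*Ra)) * Rpower Lr (2/3) <= tau*Rb/cbrt(Ar*Ra) /\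
 tau*Rb/cbrt(Ar*Ra) < N + 2.
Proof.
intros HN HA Hm HK H1a H1b H2a H2b HR1 HR2 Ht Htu HL HLt.
set (p := sqrt m2). set (k := sqrt K2). set (q1 := sqrt s1). set (q2 := sqrt s2). fold q1 in HR1. fold q2 in HR2.
assert (Hp: 0 < p) by (apply sqrt_lt_R0; auto).
assert (Hpq1: p <= q1) by (apply sqrt_le_1_alt; auto).
assert (Hq2k: q2 <= k) by (apply sqrt_le_1_alt; auto).
assert (Hq2: 0 < q2) by (apply sqrt_lt_R0; lra).
assert (Ep: m2 = p^2) by (unfold p; rewrite pow2_sqrt; lra).
assert (Ek: K2 = k^2) by (unfold k; rewrite pow2_sqrt; lra).
assert (EAR: Ar*Ra = q1^3). { rewrite HR1. unfold q1. field. lra. }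
assert (Hc: cbrt (Ar*Ra) = q1) by (rewrite EAR; unfold cbrt; apply cbrt_cube; lra).
assert (HP: 0 < Ar*Ra) by (rewrite EAR; apply pow_lt; lra).
unfold cbrt at 1 3 4. split; [|split].
- apply rpow_lem; auto.
- apply rpow_lem; auto.
- rewrite Hc. set (c := 1 + 1/N).
  assert (Hc1: 1 <= c) by (unfold c; assert (0 < 1/N) by (apply Rdiv_lt_0_compat; lra); lra).
  assert (Hkc: k <= c*p).
  { assert (k^2 <= (c*p)^2). { rewrite <- Ek. apply (Rle_trans _ _ _ HK). rewrite Ep. 
      replace ((c*p)^2) with (c*(c*p^2)) by ring. fold c. 
      assert (0 <= p^2) by nra. nra. }
    assert (0 <= c*p) by nra. nra. }
  assert (Hk3: k^3 <= c^2 * p^3).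
  { assert (k^2 <= c*p^2) by (rewrite <- Ek, <- Ep; auto).
    assert (0 <= k) by lra.
    replace (k^3) with (k * k^2) by ring.
    apply Rle_trans with (c*p * (c*p^2)). apply Rmult_le_compat; nra. nra. }
  assert (HR2b: Rb <= k^3/Ar). { rewrite HR2. unfold Rdiv. apply Rmult_le_compat_r.
     left; apply Rinv_0_lt_compat; auto. apply pow_incr; split; lra. }
  assert (Htau: tau*Rb <= (N-1)*(Ar/p^2) * (k^3/Ar)).
  { rewrite <- Ep. apply Rmult_le_compat; try lra. rewrite HR2. 
    apply Rmult_le_pos. apply pow_le; lra. left; apply Rinv_0_lt_compat; auto. }
  assert (Ec: (N-1)*c^2 < N+2).
  { unfold c. replace ((N-1)*(1+1/N)^2) with ((N-1)*(N+1)^2/N^2) by (field; lra).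
    apply (Rmult_lt_reg_r (N^2)). nra. unfold Rdiv. rewrite Rmult_assoc, Rinv_l by nra. nra. }
  apply Rle_lt_trans with (tau*Rb/p).
  { unfold Rdiv. apply Rmult_le_compat_l. nra. apply Rinv_le_contravar; auto. }
  apply Rle_lt_trans with ((N-1)*(Ar/p^2) * (k^3/Ar)/p).
  { unfold Rdiv. apply Rmult_le_compat_r. left; apply Rinv_0_lt_compat; auto. exact Htau. }
  replace ((N-1)*(Ar/p^2) * (k^3/Ar)/p) with ((N-1)*k^3/p^3) by (field; lra).
  apply Rle_lt_trans with ((N-1)*c^2).
  { apply (Rmult_le_reg_r (p^3)). apply pow_lt; auto. unfold Rdiv. rewrite Rmult_assoc, Rinv_l.
    2: apply pow_nonzero; lra. rewrite Rmult_1_r, Rmult_assoc. apply Rmult_le_compat_l; lra. }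
  exact Ec.
Qed.


Lemma RInt_cst c a b : RInt (fun _ => c) a b = (b-a)*c.
Proof. rewrite RInt_const. reflexivity. Qed.

Lemma ks_lem (A s : R) : 0 < s -> A / sqrt s ^3 * sqrt s = A / s.
Proof. intros H. pose proof (sqrt_lt_R0 s H). pose proof (pow2_sqrt s).
generalize dependent (sqrt s). intros q Hq E. rewrite <- E by lra. field. lra. Qed.

Lemma Sq_id ex ey wx wy Mr t : 0 < wx^2+wy^2 -> Sq ex ey wx wy Mr t =
  ((wx^2+wy^2)^2 * (Mr - 1/2 + (ex*wx+ey*wy)/(wx^2+wy^2) + t)^2 + (ex*wy-ey*wx)^2)/(wx^2+wy^2).
Proof. intros H. unfold Sq. field. lra. Qed.

Lemma bnd_lem (a A u0 N t : R) : 0 < a -> 0 < u0 -> 0 <= t <= N-1 ->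
  (a^2*u0^2 + A^2)/a <= (a^2*(u0+t)^2 + A^2)/a <= (a^2*(u0+N-1)^2 + A^2)/a.
Proof. intros Ha Hu Ht. unfold Rdiv. assert (0 < /a) by (apply Rinv_0_lt_compat; auto).
assert (0 <= a^2) by nra.
split; apply Rmult_le_compat_r; try lra; apply Rplus_le_compat_r; apply Rmult_le_compat_l; auto;
 apply pow_incr; lra. Qed.

Lemma ratio_lem (a A u0 N : R) : 0 < a -> 2 <= N -> 3*N^2 < u0 ->
  (a^2*(u0+N-1)^2 + A^2)/a <= (1+1/N)*((a^2*u0^2 + A^2)/a).
Proof. intros Ha HN Hu.
assert (H1: N*(u0+N-1)^2 <= (N+1)*u0^2).
{ assert (0 < N-1) by lra. assert (0 < u0) by nra.
  assert (2*N*(N-1)*u0 + N*(N-1)^2 <= u0^2).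
  { assert (u0^2 >= 3*N^2*u0) by nra.
    assert (N*(N-1)^2 <= N^2*u0).
    { assert (N <= u0) by nra. assert ((N-1)^2 <= N^2) by nra.
      apply Rle_trans with (N*N^2). apply Rmult_le_compat_l; lra.
      replace (N*N^2) with (N^2*N) by ring. apply Rmult_le_compat_l; nra. }
    nra. }
  nra. }
assert (H2: (u0+N-1)^2 <= (1+1/N)*u0^2).
{ apply (Rmult_le_reg_l N). lra. replace (N*((1+1/N)*u0^2)) with ((N+1)*u0^2) by (field; lra). auto. }
assert (0 <= a^2) by nra. assert (0 <= A^2) by nra. assert (0 < 1/N) by (apply Rdiv_lt_0_compat; lra).
replace ((1+1/N)*((a^2*u0^2 + A^2)/a)) with ((a^2*((1+1/N)*u0^2) + (1+1/N)*A^2)/a) by (field; lra).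
unfold Rdiv. apply Rmult_le_compat_r. left; apply Rinv_0_lt_compat; auto.
apply Rplus_le_compat. apply Rmult_le_compat_l; auto. nra. Qed.

Lemma pw_lem (Ar s Rb : R) : 0 < Ar -> 0 < s -> sqrt s^3/Ar <= Rb -> sqrt s <= Rb*(Ar/s).
Proof. intros HA Hs H. pose proof (sqrt_lt_R0 s Hs). pose proof (pow2_sqrt s).
generalize dependent (sqrt s). intros q H Hq E. assert (E2: q^2 = s) by (apply E; lra). rewrite <- E2.
assert (q^3 <= Rb*Ar).
{ apply (Rmult_le_reg_r (/Ar)). apply Rinv_0_lt_compat; auto. 
  replace (Rb*Ar*/Ar) with Rb by (field; lra). exact H. }
replace (Rb*(Ar/q^2)) with ((Rb*Ar)/q^2) by (field; lra).
apply (Rmult_le_reg_r (q^2)). nra. replace (Rb*Ar/q^2*q^2) with (Rb*Ar) by (field; lra). nra. Qed.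

Theorem theorem8p1 (v0 v1 v2 : pt) (n : nat) :
  lin_indep v1 v2 -> (2 <= n)%nat ->
  exists (a b : R) (x y : R -> R),
    convex_curve a b x y /\
    lattice_count v0 v1 v2 a b x y n /\
    forall R1 R2 : R,
      is_min_radius a b x y R1 -> is_max_radius a b x y R2 ->
      let A := lattice_inv v1 v2 in
      let L := curve_length a b x y in
      let tau := total_curvature a b x y in
      L / cbrt (A * R1)
        <= cbrt (tau * R2 / (A * R1)) * Rpower L (2/3) /\
      cbrt (tau * R2 / (A * R1)) * Rpower L (2/3)
        <= tau * R2 / cbrt (A * R1) /\
      tau * R2 / cbrt (A * R1) < INR n + 2.
Proof.
intros Hli Hn. unfold lin_indep in Hli.
assert (Hsg: exists zs : Z, (IZR zs = 1 \/ IZR zs = -1) /\ lattice_inv v1 v2 = IZR zs * det2 v1 v2).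
{ unfold lattice_inv. destruct (Rle_dec 0 (det2 v1 v2)) as [H|H].
  - exists 1%Z. split; [left; reflexivity|]. rewrite Rabs_pos_eq by auto. simpl; ring.
  - exists (-1)%Z. split; [right; reflexivity|]. rewrite Rabs_left by lra. simpl; ring. }
destruct Hsg as [zs [Hzs HAeq]].
set (Ar := lattice_inv v1 v2) in *.
assert (HAr: 0 < Ar). { unfold Ar, lattice_inv. apply Rabs_pos_lt. auto. }
set (sg := IZR zs) in *.
set (ex := sg * fst v1). set (ey := sg * snd v1). set (wx := fst v2). set (wy := snd v2).
assert (Hdet: ex*wy - ey*wx = Ar). { rewrite HAeq. unfold ex, ey, wx, wy, det2. ring. }
assert (Hdet0: ex*wy - ey*wx <> 0) by lra.
assert (Hw: wx <> 0 \/ wy <> 0).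
{ destruct (Req_dec wx 0) as [E|E]; [|left; auto]. right. intro E2. rewrite E, E2 in Hdet. lra. }
set (a := wx^2 + wy^2).
assert (Ha: 0 < a). { unfold a. destruct Hw as [H|H].
  - pose proof (pow2_gt_0 _ H). pose proof (pow2_ge_0 wy). lra.
  - pose proof (pow2_gt_0 _ H). pose proof (pow2_ge_0 wx). lra. }
set (b := ex*wx + ey*wy).
set (N := INR n).
assert (HN: 2 <= N). { unfold N. replace 2 with (INR 2) by (simpl; ring). apply le_INR; auto. }
destruct (archimed (3*N^2 + Rabs b / a + 1)) as [HM _].
set (M := up (3*N^2 + Rabs b / a + 1)) in *.
set (Mr := IZR M) in *.
exists 0, (N-1), (crv (fst v0) ex wx Mr), (crv (snd v0) ey wy Mr).
assert (Hd1x: d1 (crv (fst v0) ex wx Mr) = fun t => ex + (Mr + t - 1/2)*wx) by apply crv_D1.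
assert (Hd1y: d1 (crv (snd v0) ey wy Mr) = fun t => ey + (Mr + t - 1/2)*wy) by apply crv_D1.
assert (Hd2x: d2 (crv (fst v0) ex wx Mr) = fun _ => wx).
{ unfold d2. rewrite crv_D1. apply crv_D2. }
assert (Hd2y: d2 (crv (snd v0) ey wy Mr) = fun _ => wy).
{ unfold d2. rewrite crv_D1. apply crv_D2. }
set (x := crv (fst v0) ex wx Mr) in *. set (y := crv (snd v0) ey wy Mr) in *.
set (SS := Sq ex ey wx wy Mr).
assert (HSpos: forall t, 0 < SS t) by (intro t; apply Sq_pos; auto).
assert (Hspeed: forall t, speed x y t = sqrt (SS t)).
{ intro t. unfold speed. rewrite Hd1x, Hd1y. reflexivity. }
assert (Hcross: forall t, d1 x t * d2 y t - d1 y t * d2 x t = Ar).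
{ intro t. rewrite Hd1x, Hd1y, Hd2x, Hd2y. rewrite <- Hdet. ring. }
assert (Hsq: forall t, 0 < sqrt (SS t)) by (intro t; apply sqrt_lt_R0; auto).
assert (Hcurv: forall t, curvature x y t = Ar / sqrt (SS t)^3).
{ intro t. unfold curvature. rewrite Hcross, <- Hspeed. reflexivity. }
assert (Hrad: forall t, radius x y t = sqrt (SS t)^3 / Ar).
{ intro t. unfold radius. rewrite Hcurv. apply Rinv_div. }
assert (Hks: forall t, curvature x y t * speed x y t = Ar / SS t).
{ intro t. rewrite Hcurv, Hspeed. apply ks_lem; auto. }
split; [|split].
-
  split; [lra|split].
  + intro t. unfold x, y. split; [apply crv_ex|split; [apply crv_ex|]].
    rewrite !crv_D1. split; [apply crv_ex2|split; [apply crv_ex2|]].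
    fold x y. rewrite Hd2x, Hd2y. split; apply continuous_const.
  + intros t _. split; [|split].
    * rewrite Hd1x, Hd1y. destruct (Req_dec (ex + (Mr + t - 1/2)*wx) 0) as [E|E]; [|left; auto].
      right. intro E2. pose proof (HSpos t). unfold SS, Sq in H. rewrite E, E2 in H. lra.
    * rewrite Hd2x, Hd2y. auto.
    * rewrite Hcross. lra.
-
  assert (Tc: forall t, (x t - fst v0)*wy - (y t - snd v0)*wx = t*Ar).
  { intro t. unfold x, y, crv. rewrite <- Hdet. ring. }
  assert (Hsg2: sg * sg = 1) by (destruct Hzs as [E|E]; rewrite E; ring).
  exists (map (fun k => (x (INR k), y (INR k))) (seq 0 n)). split; [|split].
  + apply Injective_map_NoDup; [|apply seq_NoDup]. intros i j E. injection E as E1 E2.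
    assert (INR i * Ar = INR j * Ar) by (rewrite <- !Tc, E1, E2; reflexivity).
    apply INR_eq. apply (Rmult_eq_reg_r Ar); auto; lra.
  + rewrite length_map, length_seq. reflexivity.
  + intro p. split.
    * intro Hin. apply in_map_iff in Hin. destruct Hin as [k [Ep Hk]]. apply in_seq in Hk. subst p.
      split.
      { exists (INR k). split; [|reflexivity]. split; [apply pos_INR|].
        assert (INR (Datatypes.S k) <= INR n) by (apply le_INR; lia). rewrite S_INR in H. unfold N. lra. }
      destruct (half_int k) as [h Hh]. exists (zs * Z.of_nat k)%Z, (M * Z.of_nat k + h)%Z.
      simpl fst; simpl snd. rewrite plus_IZR, !mult_IZR, <- INR_IZR_INZ, Hh.
      unfold x, y, crv, ex, ey, wx, wy, Mr, sg. split; ring.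
    * intros [[t [Ht Ep]] [m [kk [E1 E2]]]]. subst p. simpl in E1, E2.
      assert (E3: t*Ar = IZR m * det2 v1 v2).
      { rewrite <- Tc, E1, E2. unfold det2, wx, wy. ring. }
      rewrite HAeq in E3.
      assert (E4: t * sg = IZR m).
      { apply (Rmult_eq_reg_r (det2 v1 v2)); auto. rewrite <- E3. ring. }
      assert (Ht': t = IZR (zs * m)).
      { rewrite mult_IZR. fold sg. rewrite <- E4. replace t with (t * (sg*sg)) at 1 by (rewrite Hsg2; ring). ring. }
      rewrite Ht' in Ht. unfold N in Ht. rewrite INR_IZR_INZ in Ht.
      destruct Ht as [Ht1 Ht2].
      apply le_IZR in Ht1.
      assert (Ht3: IZR (zs*m) < IZR (Z.of_nat n)) by lra. apply lt_IZR in Ht3.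
      apply in_map_iff. exists (Z.to_nat (zs*m)). split.
      { rewrite INR_IZR_INZ, Z2Nat.id by lia. rewrite <- Ht'. reflexivity. }
      apply in_seq. lia.
-
  intros Ra Rb [[t1 [Ht1 HR1]] _] [[t2 [Ht2 HR2]] Hmax]. cbv zeta.
  rewrite Hrad in HR1, HR2.
  set (u0 := Mr - 1/2 + b/a).
  assert (Hu0: 3*N^2 < u0).
  { assert (-b <= Rabs b) by (rewrite <- Rabs_Ropp; apply Rle_abs).
    assert (-b/a <= Rabs b/a) by (unfold Rdiv; apply Rmult_le_compat_r; [left; apply Rinv_0_lt_compat; auto|auto]).
    unfold u0. unfold Rdiv in *. rewrite Ropp_mult_distr_l_reverse in H0. lra. }
  assert (HSq: forall t, SS t = (a^2*(u0+t)^2 + Ar^2)/a).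
  { intro t. unfold SS. rewrite Sq_id by auto. rewrite Hdet. fold a. fold b. 
    replace (Mr - 1/2 + b/a + t) with (u0+t) by (unfold u0; ring). reflexivity. }
  set (m2 := (a^2*u0^2 + Ar^2)/a). set (K2 := (a^2*(u0+N-1)^2 + Ar^2)/a).
  assert (Hm2: 0 < m2). { unfold m2. apply Rdiv_lt_0_compat; auto. nra. }
  assert (Hb: forall t, 0 <= t <= N-1 -> m2 <= SS t <= K2).
  { intros t Ht. rewrite HSq. apply bnd_lem; auto; nra. }
  assert (HK: K2 <= (1+1/N)*m2) by (apply ratio_lem; auto).
  assert (Htau: total_curvature 0 (N-1) x y = RInt (fun t => Ar / SS t) 0 (N-1)).
  { unfold total_curvature. apply RInt_ext. intros; apply Hks. }
  assert (HL: curve_length 0 (N-1) x y = RInt (fun t => sqrt (SS t)) 0 (N-1)).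
  { unfold curve_length. apply RInt_ext. intros; apply Hspeed. }
  assert (Ex1: forall c, ex_RInt (fun t => c / SS t) 0 (N-1)).
  { intro c. apply (@ex_RInt_continuous R_CompleteNormedModule). intros; apply cont_inv; auto. }
  assert (Ex2: ex_RInt (fun t => sqrt (SS t)) 0 (N-1)).
  { apply (@ex_RInt_continuous R_CompleteNormedModule). intros; apply cont_sqrt; auto. }
  assert (Ex3: ex_RInt (fun t => Rb * (Ar / SS t)) 0 (N-1)).
  { apply (ex_RInt_scal (fun t => Ar / SS t)). apply Ex1. }
  rewrite Htau, HL. fold N.
  set (tau := RInt (fun t => Ar / SS t) 0 (N-1)).
  set (L := RInt (fun t => sqrt (SS t)) 0 (N-1)).
  assert (Hcst: forall c:R, ex_RInt (V:=R_NormedModule) (fun _ => c) 0 (N-1)) by (intro c; apply ex_RInt_const).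
  assert (Htu: tau <= (N-1)*(Ar/m2)).
  { unfold tau. apply Rle_trans with (RInt (fun _ => Ar/m2) 0 (N-1)).
    - apply RInt_le; auto; try lra. intros t Ht. unfold Rdiv. apply Rmult_le_compat_l; [lra|].
      apply Rinv_le_contravar; auto. apply Hb; lra.
    - rewrite RInt_cst. lra. }
  assert (Htp: 0 < tau).
  { apply Rlt_le_trans with ((N-1)*(Ar/K2)).
    - apply Rmult_lt_0_compat; [lra|]. apply Rdiv_lt_0_compat; auto. destruct (Hb 0) as [_ Hz]; [lra|]. destruct (Hb 0) as [Hz2 _]; [lra|]. lra.
    - replace ((N-1)*(Ar/K2)) with (RInt (fun _ => Ar/K2) 0 (N-1)) by (rewrite RInt_cst, Rminus_0_r; reflexivity).
      unfold tau. apply RInt_le; auto; try lra. intros t Ht. unfold Rdiv. apply Rmult_le_compat_l; [lra|].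
      apply Rinv_le_contravar; auto. apply Hb; lra. }
  assert (HLp: 0 < L).
  { apply Rlt_le_trans with ((N-1)*sqrt m2).
    - apply Rmult_lt_0_compat; [lra|]. apply sqrt_lt_R0; auto.
    - replace ((N-1)*sqrt m2) with (RInt (fun _ => sqrt m2) 0 (N-1)) by (rewrite RInt_cst, Rminus_0_r; reflexivity).
      unfold L. apply RInt_le; auto; try lra. intros t Ht. apply sqrt_le_1_alt. apply Hb; lra. }
  assert (HLt: L <= tau*Rb).
  { apply Rle_trans with (RInt (fun t => Rb * (Ar / SS t)) 0 (N-1)).
    - unfold L. apply RInt_le; auto; try lra. intros t Ht. apply pw_lem; auto.
      rewrite <- Hrad. apply Hmax. lra.
    - right. rewrite Rmult_comm. unfold tau.
      exact (RInt_scal (V:=R_CompleteNormedModule) (fun t => Ar / SS t) 0 (N-1) Rb (Ex1 Ar)). }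
  apply (final_ineq N Ar m2 K2 (SS t1) (SS t2)); auto; try apply Hb; auto.
Qed.
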